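(* Let $r_1,\dots,r_n$ be pairwise distinct integers and $v_1,\dots,v_n\in\mathbb{N}\cup\{\infty\}$ such that the support $S_{(r_1,\dots,r_n)}^{(v_1,\dots,v_n)}$ is a subgroup of $\mathbb{Z}$, and let $d=\gcd(r_1,\dots,r_n)$. If $S$ is a basis (generating set as a $T_{\mathbb{Z}}$-ideal) for $T_{\mathbb{Z}}(E_{(r_1/d,\dots,r_n/d)}^{(v_1,\dots,v_n)})$, then the $T_{\mathbb{Z}}$-ideal $T_{\mathbb{Z}}(E_{(r_1,\dots,r_n)}^{(v_1,\dots,v_n)})$ is generated by $S'\cup N$, where $S'=\{\Psi_d(\Phi_d(f)) : f\in S\}$ and $N=\{x_i^m\in X : m\notin d\mathbb{Z}\}$.
   Context: $F$ is a field of characteristic zero; $E$ is the Grassmann algebra of an infinite-dimensional $F$-vector space with basis $e_1,e_2,\dots$. For pairwise distinct integers $r_1,\dots,r_n$ and $v_j\in\mathbb{N}\cup\{\infty\}$, $E_{(r_1,\dots,r_n)}^{(v_1,\dots,v_n)}=\bigoplus_r A_r$ is the $\mathbb{Z}$-grading obtained by splitting $\{e_i\}$ into $n$ disjoint sets of cardinalities $v_1,\dots,v_n$, giving elements of the $j$-th set degree $r_j$ and monomials the sum of degrees; its support is $S_{(r_1,\dots,r_n)}^{(v_1,\dots,v_n)}=\{r: A_r\ne0\}$. For a group $G$, $F\langle X|G\rangle$ is the free associative algebra on variables $x_i^g$ ($i\ge1$, $g\in G$) of degree $g$; $X$ denotes the set of variables; $T_G(A)$ is the ideal of graded identities of a $G$-graded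 algebra $A$; a $T_G$-ideal is an ideal invariant under all degree-preserving endomorphisms. $\Phi_d:F\langle X|\mathbb{Z}\rangle\to F\langle X|d\mathbb{Z}\rangle$ is the algebra isomorphism $x_i^n\mapsto x_i^{dn}$, and $\Psi_d:F\langle X|d\mathbb{Z}\rangle\to F\langle X|\mathbb{Z}\rangle$ is the homomorphism $x_i^{dn}\mapsto x_i^{dn}$. *)

(* Defs.v *)
From HB Require Import structures.
From mathcomp Require Import all_boot all_order all_algebra.
From mathcomp Require Import finmap.
From mathcomp.multinomials Require Import monalg.

Set Implicit Arguments.
Unset Strict Implicit.
Unset Printing Implicit Defensive.

Import Order.TTheory GRing.Theory Num.Theory.
Local Open Scope fset_scope.
Local Open Scope ring_scope.

Section Free.
Variable F : fieldType.

Definition Free (V : choiceType) := {malg F[{fmonom V}]}.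

Section Graded.
Variables (V : choiceType) (G : zmodType) (deg : V -> G).

Definition wdeg (w : {fmonom V}) : G := \sum_(x <- fmonom_val w) deg x.

Definition homog (p : Free V) (g : G) : Prop :=
  forall w, w \in msupp p -> wdeg w = g.

Definition subst (s : V -> Free V) (p : Free V) : Free V :=
  \sum_(w <- msupp p) p@_w *: \prod_(x <- fmonom_val w) s x.

Definition graded_endo (s : V -> Free V) : Prop :=
  forall x, homog (s x) (deg x).

Definition is_Tideal (I : Free V -> Prop) : Prop :=
  [/\ I 0,
      (forall f g, I f -> I g -> I (f + g)),
      (forall (c : F) f, I f -> I (c *: f)),
      (forall f g, I f -> I (g * f) /\ I (f * g))
    & (forall s f, graded_endo s -> I f -> I (subst s f))].

Definition Tgen (S : Free V -> Prop) (f : Free V) : Prop :=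
  forall I, is_Tideal I -> (forall g, S g -> I g) -> I f.
End Graded.

Definition relabel (V W : choiceType) (h : V -> W) (p : Free V) : Free W :=
  \sum_(w <- msupp p) << p@_w *g FMonom (map h (fmonom_val w)) >>.

End Free.

(* The Grassmann algebra E of the F-vector space with basis e_0, e_1, ...
   (the paper's e_1, e_2, ...).  An element of E is a finitely supported
   F-linear combination of the basis monomials e_T = e_{t1} ... e_{tk}
   (t1 < ... < tk), T a finite set of indices. *)
Section Grassmann.
Variable F : fieldType.

Definition Egr := {malg F[{fset nat}]}.

(* number of inversions when concatenating e_S and e_T *)
Definition ginv (S T : {fset nat}) : nat :=
  (\sum_(s <- S) \sum_(t <- T) (t < s)%N)%N.

Definition Emono_mul (S T : {fset nat}) : Egr :=
  if fdisjoint S T then << (-1) ^+ ginv S T *g (S `|` T) >> else 0.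

Definition Emul (a b : Egr) : Egr :=
  \sum_(S <- msupp a) \sum_(T <- msupp b) (a@_S * b@_T) *: Emono_mul S T.

Definition Eone : Egr := << fset0 >>.

(* The Z-grading E_{(r_1,...,r_n)}^{(v_1,...,v_n)}: [part i] is the index j
   of the set of the partition containing e_i; e_i has degree r_(part i). *)
Variables (n : nat) (r : 'I_n -> int) (part : nat -> 'I_n).

Definition Edeg (T : {fset nat}) : int := \sum_(i <- T) r (part i).

Definition Ehomog (a : Egr) (g : int) : Prop :=
  forall T, T \in msupp a -> Edeg T = g.

Definition Esupport (g : int) : Prop := exists a : Egr, a != 0 /\ Ehomog a g.

Definition Eeval (s : nat * int -> Egr) (f : Free F (nat * int)%type) : Egr :=
  \sum_(w <- msupp f) f@_w *: \big[Emul/Eone]_(x <- fmonom_val w) s x.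

Definition TZ (f : Free F (nat * int)%type) : Prop :=
  forall s : nat * int -> Egr, (forall x, Ehomog (s x) x.2) -> Eeval s f = 0.
End Grassmann.

(* Cardinalities v_j \in N \cup {oo}, encoded as [option nat] with [None]
   standing for oo. *)
Definition has_card (P : nat -> bool) (v : option nat) : Prop :=
  match v with
  | Some k => exists s : seq nat, [/\ uniq s, size s = k & forall i, P i = (i \in s)]
  | None => forall m : nat, exists i : nat, (m <= i)%N /\ P i
  end.

Definition part_card (n : nat) (part : nat -> 'I_n) (v : 'I_n -> option nat) : Prop :=
  forall j : 'I_n, has_card (fun i => part i == j) (v j).

Definition is_subgroupZ (P : int -> Prop) : Prop :=
  P 0 /\ (forall x y, P x -> P y -> P (x - y)).

Definition gcd_fam (n : nat) (r : 'I_n -> int) : int := \big[gcdz/0]_(j < n) r j.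

Definition dZ (d : int) := {g : int | (d %| g)%Z}.
Definition XZ := (nat * int)%type.
Definition XdZ (d : int) := (nat * dZ d)%type.

Definition FreeZ (F : fieldType) := Free F XZ.
Definition FreedZ (F : fieldType) (d : int) := Free F (XdZ d).

Lemma dvdz_mul_self (d n : int) : (d %| d * n)%Z.
Proof. exact: dvdz_mulr (dvdzz d). Qed.

Definition Phi (F : fieldType) (d : int) (f : FreeZ F) : FreedZ F d :=
  relabel (fun x : XZ => (x.1, exist (fun g : int => (d %| g)%Z) (d * x.2) (dvdz_mul_self d x.2)) : XdZ d) f.

Definition Psi (F : fieldType) (d : int) (f : FreedZ F d) : FreeZ F :=
  relabel (fun x : XdZ d => (x.1, sval x.2) : XZ) f.

Definition var (F : fieldType) (i : nat) (m : int) : FreeZ F :=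
  << FMonom [:: ((i, m) : XZ)] >>.

Definition degZ (x : XZ) : int := x.2.

(* Main.v *)
Require Import Defs.
From HB Require Import structures.
From mathcomp Require Import all_boot all_order all_algebra.
From mathcomp Require Import finmap.
From mathcomp.multinomials Require Import monalg.
Set Implicit Arguments.
Unset Strict Implicit.
Unset Printing Implicit Defensive.
Import Order.TTheory GRing.Theory Num.Theory.
Local Open Scope ring_scope.

Section Gen.
Variable F : fieldType.

Definition Lin (K : choiceType) (M : lmodType F) (G : K -> M) (p : {malg F[K]}) : M :=
  \sum_(w <- msupp p) p@_w *: G w.

Lemma LinEw (K : choiceType) (M : lmodType F) (G : K -> M) p (D : {fset K}) :
  (msupp p `<=` D)%fset -> Lin G p = \sum_(w <- D) p@_w *: G w.
Proof.
move=> le; rewrite /Lin (big_fset_incl _ le) // => x _ /mcoeff_outdom ->.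
by rewrite scale0r.
Qed.

Lemma Lin_lin (K : choiceType) (M : lmodType F) (G : K -> M) a p q :
  Lin G (a *: p + q) = a *: Lin G p + Lin G q.
Proof.
set D := (msupp p `|` msupp q `|` msupp (a *: p + q))%fset.
rewrite (@LinEw _ _ _ (a *: p + q) D); last by rewrite /D fsubsetUr.
rewrite (@LinEw _ _ _ p D); last by rewrite /D -fsetUA fsubsetUl.
rewrite (@LinEw _ _ _ q D); last by rewrite /D fsubsetU // fsubsetUr.
rewrite scaler_sumr -big_split /=; apply: eq_bigr => w _.
by rewrite mcoeffD mcoeffZ scalerDl scalerA.
Qed.

Lemma Lin0 (K : choiceType) (M : lmodType F) (G : K -> M) : Lin G 0 = 0.
Proof. by rewrite /Lin msupp0 big_nil. Qed.

Lemma LinD (K : choiceType) (M : lmodType F) (G : K -> M) p q :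
  Lin G (p + q) = Lin G p + Lin G q.
Proof. by rewrite -[p in LHS]scale1r Lin_lin scale1r. Qed.

Lemma LinZ (K : choiceType) (M : lmodType F) (G : K -> M) a p :
  Lin G (a *: p) = a *: Lin G p.
Proof. by rewrite -[a *: p]addr0 Lin_lin Lin0 addr0. Qed.

Lemma LinU (K : choiceType) (M : lmodType F) (G : K -> M) c k :
  Lin G << c *g k >> = c *: G k.
Proof.
rewrite (@LinEw _ _ _ _ [fset k]%fset) ?msuppU_le //.
by rewrite big_seq_fset1 mcoeffUU.
Qed.

Lemma Lin_sum (K : choiceType) (M : lmodType F) (G : K -> M) (I : Type) (s : seq I) (E : I -> {malg F[K]}) :
  Lin G (\sum_(i <- s) E i) = \sum_(i <- s) Lin G (E i).
Proof.
elim: s => [|x s IH]; first by rewrite !big_nil Lin0.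
by rewrite !big_cons LinD IH.
Qed.

Lemma Lin_comp (K : choiceType) (M N : lmodType F) (G : K -> M) (T : M -> N) p :
  (forall a x y, T (a *: x + y) = a *: T x + T y) ->
  T (Lin G p) = Lin (fun w => T (G w)) p.
Proof.
move=> lT; have T0 : T 0 = 0.
  have := lT 1 0 0; rewrite scaler0 addr0 scale1r => /eqP.
  by rewrite -subr_eq subrr eq_sym => /eqP.
rewrite /Lin; elim: (enum_fset (msupp p)) => [|x s IH]; first by rewrite !big_nil.
by rewrite !big_cons lT IH.
Qed.

Lemma scaleU (K : choiceType) c (k : K) : c *: (<< k >> : {malg F[K]}) = << c *g k >>.
Proof. by apply/malgP => k'; rewrite mcoeffZ !mcoeffU mulr_natr. Qed.

Lemma Lin_id (K : choiceType) (p : {malg F[K]}) : Lin (fun w => << w >>) p = p.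
Proof.
by rewrite [RHS]monalgE /Lin; apply: eq_bigr => w _; rewrite scaleU.
Qed.

Lemma scalerAr_malg (K : monomType) (c : F) (x y : {malg F[K]}) :
  x * (c *: y) = c *: (x * y).
Proof.
rewrite (malgMEw (fsubset_refl (msupp x)) (msuppZ_le c y)).
rewrite [x * y]malgME scaler_sumr.
apply: eq_bigr => k1 _; rewrite scaler_sumr; apply: eq_bigr => k2 _.
rewrite mcoeffZ.
have -> : x@_k1 * (c * y@_k2) = c * (x@_k1 * y@_k2) by rewrite mulrCA.
by apply/malgP => k; rewrite mcoeffZ !mcoeffU mulrnAr.
Qed.

Lemma Lin_mul (K K' : monomType) (G : K -> {malg F[K']}) p q :
  (forall k1 k2, G (mmul k1 k2) = G k1 * G k2) -> Lin G (p * q) = Lin G p * Lin G q.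
Proof.
move=> GM; rewrite [p * q]malgME; apply: etrans; first exact: Lin_sum.
rewrite /Lin mulr_suml; apply: eq_bigr => k1 _.
apply: etrans; first exact: Lin_sum.
rewrite mulr_sumr; apply: eq_bigr => k2 _.
by rewrite LinU GM -scalerAl scalerAr_malg scalerA.
Qed.

Lemma Lin_addG (K : choiceType) (M : lmodType F) (G1 G2 : K -> M) p :
  Lin (fun w => G1 w + G2 w) p = Lin G1 p + Lin G2 p.
Proof. by rewrite /Lin -big_split; apply: eq_bigr => w _; rewrite scalerDr. Qed.

Lemma Lin_eqG (K : choiceType) (M : lmodType F) (G1 G2 : K -> M) p :
  G1 =1 G2 -> Lin G1 p = Lin G2 p.
Proof. by move=> e; apply: eq_bigr => w _; rewrite e. Qed.

Section FreeV.
Variables (V : choiceType) (G : zmodType) (deg : V -> G).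

Lemma homogP (p : Free F V) g :
  homog deg p g <-> (forall w, wdeg deg w != g -> p@_w = 0).
Proof.
split=> [H w ne|H w wp].
  apply: mcoeff_outdom; apply/negP => /H e; by rewrite e eqxx in ne.
apply/eqP; apply: contraTT wp => /H e; by rewrite -mcoeff_eq0 e.
Qed.

Lemma homog_Lin (K : choiceType) (H : K -> Free F V) (p : {malg F[K]}) g :
  (forall w, w \in msupp p -> homog deg (H w) g) -> homog deg (Lin H p) g.
Proof.
move=> Hw; apply/homogP => w ne; rewrite /Lin raddf_sum /= big_seq big1 // => k kp.
by rewrite mcoeffZ (proj1 (homogP _ _) (Hw k kp) w ne) mulr0.
Qed.

Lemma homog0 g : homog deg (0 : Free F V) g.
Proof. by move=> w; rewrite msupp0. Qed.

Lemma homogU (w : {fmonom V}) g : wdeg deg w = g -> homog deg (<< w >> : Free F V) g.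
Proof. by move=> e w'; rewrite msuppU1 in_fset1 => /eqP ->. Qed.

Lemma Tgen_ideal (S : Free F V -> Prop) : is_Tideal deg (Tgen deg S).
Proof.
split.
- by move=> I [] *.
- by move=> f g Hf Hg I HI HS; case: (HI) => _ HD _ _ _; apply: HD; [apply: Hf|apply: Hg].
- by move=> c f Hf I HI HS; case: (HI) => _ _ HZ _ _; apply: HZ; apply: Hf.
- by move=> f g Hf; split=> I HI HS; case: (HI) => _ _ _ HM _; have [] := HM f g (Hf I HI HS).
- by move=> s f Hs Hf I HI HS; case: (HI) => _ _ _ _ HE; apply: HE => //; apply: Hf.
Qed.

Lemma Tideal_Lin (I : Free F V -> Prop) (K : choiceType) (H : K -> Free F V) (p : {malg F[K]}) :
  @is_Tideal F V G deg I -> (forall w, w \in msupp p -> I (H w)) -> I (Lin H p).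
Proof.
case=> I0 ID IZ _ _ Hw; rewrite /Lin.
have : forall w, w \in enum_fset (msupp p) -> I (H w) by exact: Hw.
elim: (enum_fset (msupp p)) => [|x s IHs] Hs; first by rewrite big_nil.
rewrite big_cons; apply: ID; first by apply: IZ; apply: Hs; rewrite mem_head.
by apply: IHs => w ws; apply: Hs; rewrite in_cons ws orbT.
Qed.
End FreeV.
End Gen.



Section Gen2.
Variable F : fieldType.
Lemma Umul (V : choiceType) (a b : seq V) :
  (<< FMonom (a ++ b) >> : Free F V) = << FMonom a >> * << FMonom b >>.
Proof.
rewrite malgM_def fgmulUU mulr1; congr << _ >>.
by apply: val_inj; rewrite /= fmM.
Qed.

Lemma relabelE (V W : choiceType) (h : V -> W) (p : Free F V) :
  relabel h p = Lin (fun w => (<< FMonom (map h (fmonom_val w)) >> : Free F W)) p.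
Proof. by apply: eq_bigr => w _; rewrite scaleU. Qed.
End Gen2.

Section Conc.
Variable F : fieldType.
Variable d : int.
Hypothesis d0 : d != 0.
Local Notation FZ := (Free F XZ).

Definition good (x : XZ) : bool := (d %| x.2)%Z.
Definition goodw (w : seq XZ) := all good w.
Definition hq (x : XZ) : XZ := (x.1, (x.2 %/ d)%Z).
Definition hm (x : XZ) : XZ := (x.1, d * x.2).
Definition GQ (w : {fmonom XZ}) : FZ :=
  if goodw (fmonom_val w) then << FMonom (map hq (fmonom_val w)) >> else 0.
Definition GP (w : {fmonom XZ}) : FZ := << FMonom (map hm (fmonom_val w)) >>.
Definition Q (p : FZ) : FZ := Lin GQ p.
Definition PP (p : FZ) : FZ := Lin GP p.

Lemma wdegE (w : {fmonom XZ}) : wdeg degZ w = \sum_(x <- fmonom_val w) x.2.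
Proof. by []. Qed.

Lemma good_wdeg (s : seq XZ) : goodw s -> (d %| \sum_(x <- s) x.2)%Z.
Proof.
elim: s => [|x s IH]; first by rewrite big_nil dvdz0.
by rewrite big_cons /= => /andP[gx gs]; rewrite rpredD // IH.
Qed.

Lemma hq_wdeg (s : seq XZ) : goodw s -> (\sum_(x <- map hq s) x.2) * d = \sum_(x <- s) x.2.
Proof.
move=> /allP gs; rewrite big_map mulr_suml big_seq [RHS]big_seq.
by apply: eq_bigr => x xs; rewrite /= divzK //; apply: gs.
Qed.

Lemma hm_wdeg (s : seq XZ) : \sum_(x <- map hm s) x.2 = d * \sum_(x <- s) x.2.
Proof. by rewrite big_map mulr_sumr. Qed.

Lemma GQ_mul w1 w2 : GQ (mmul w1 w2) = GQ w1 * GQ w2.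
Proof.
rewrite /GQ fmM /goodw all_cat.
case: (all good (fmonom_val w1)); case: (all good (fmonom_val w2)); rewrite ?mul0r ?mulr0 //.
by rewrite map_cat Umul.
Qed.

Lemma GP_mul w1 w2 : GP (mmul w1 w2) = GP w1 * GP w2.
Proof. by rewrite /GP fmM map_cat Umul. Qed.

Lemma Q_lin a x y : Q (a *: x + y) = a *: Q x + Q y.
Proof. exact: Lin_lin. Qed.
Lemma PP_lin a x y : PP (a *: x + y) = a *: PP x + PP y.
Proof. exact: Lin_lin. Qed.

Lemma Q_mul x y : Q (x * y) = Q x * Q y.
Proof. exact: Lin_mul GQ_mul. Qed.
Lemma PP_mul x y : PP (x * y) = PP x * PP y.
Proof. exact: Lin_mul GP_mul. Qed.

Lemma Q1 : Q 1 = 1.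
Proof.
rewrite /Q; apply: etrans; first exact: LinU.
by rewrite scale1r /GQ fm1 /= -fmoneE.
Qed.

Lemma PP1 : PP 1 = 1.
Proof.
rewrite /PP; apply: etrans; first exact: LinU.
by rewrite scale1r /GP fm1 /= -fmoneE.
Qed.

Lemma Q_prod (I : Type) (s : seq I) (E : I -> FZ) :
  Q (\prod_(i <- s) E i) = \prod_(i <- s) Q (E i).
Proof.
elim: s => [|x s IH]; first by rewrite !big_nil Q1.
by rewrite !big_cons Q_mul IH.
Qed.

Lemma PP_prod (I : Type) (s : seq I) (E : I -> FZ) :
  PP (\prod_(i <- s) E i) = \prod_(i <- s) PP (E i).
Proof.
elim: s => [|x s IH]; first by rewrite !big_nil PP1.
by rewrite !big_cons PP_mul IH.
Qed.

Lemma Q_bad (p : FZ) m : homog degZ p m -> ~~ (d %| m)%Z -> Q p = 0.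
Proof.
move=> hp nd; rewrite /Q /Lin big_seq big1 // => w wp.
rewrite /GQ; case: ifP => [gw|_]; last by rewrite scaler0.
by move: (good_wdeg gw); rewrite -wdegE (hp w wp) (negbTE nd).
Qed.

Lemma Q_homog (p : FZ) g : homog degZ p g -> homog degZ (Q p) (g %/ d)%Z.
Proof.
move=> hp; apply: homog_Lin => w wp; rewrite /GQ; case: ifP => gw; last exact: homog0.
apply: homogU; rewrite wdegE /= -(hp w wp) wdegE -(hq_wdeg gw) mulzK //.
Qed.

Lemma PP_homog (p : FZ) g : homog degZ p g -> homog degZ (PP p) (d * g).
Proof.
move=> hp; apply: homog_Lin => w wp; rewrite /GP.
by apply: homogU; rewrite wdegE /= hm_wdeg -(hp w wp) wdegE.
Qed.

Lemma substE (s : XZ -> FZ) (p : FZ) :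
  subst s p = Lin (fun w => \prod_(x <- fmonom_val w) s x) p.
Proof. by []. Qed.

Lemma subst_lin (s : XZ -> FZ) a x y : subst s (a *: x + y) = a *: subst s x + subst s y.
Proof. rewrite !substE; exact: Lin_lin. Qed.

Lemma subst0 (s : XZ -> FZ) : subst s 0 = 0.
Proof. by rewrite substE Lin0. Qed.

Lemma substU (s : XZ -> FZ) (w : seq XZ) : subst s << FMonom w >> = \prod_(x <- w) s x.
Proof. by rewrite substE; apply: etrans; [exact: LinU | rewrite scale1r]. Qed.

Lemma prodQ_seq (s : XZ -> FZ) (w : seq XZ) :
  (forall x, ~~ good x -> Q (s x) = 0) ->
  \prod_(x <- w) Q (s x) =
  if goodw w then \prod_(y <- map hq w) Q (s (y.1, d * y.2)) else 0.
Proof.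
move=> hb; elim: w => [|x w IH]; first by rewrite !big_nil.
rewrite big_cons /goodw /=; case gx: (good x) => /=; last by rewrite hb ?gx // mul0r.
rewrite IH -/(goodw w); case: (goodw w); last by rewrite mulr0.
rewrite big_cons.
have -> : s ((hq x).1, d * (hq x).2) = s x.
  by case: x gx => i m gx; rewrite /hq /= mulrC divzK.
by [].
Qed.

Lemma Q_subst (s : XZ -> FZ) (f : FZ) : graded_endo degZ s ->
  Q (subst s f) = subst (fun x => Q (s (x.1, d * x.2))) (Q f).
Proof.
move=> hs.
rewrite {1}substE (@Lin_comp _ _ _ _ _ Q _); last exact: Q_lin.
rewrite {2}/Q (@Lin_comp _ _ _ _ _ (fun p => subst _ p) _); last exact: subst_lin.
apply: Lin_eqG => w /=.
rewrite Q_prod prodQ_seq; last by move=> x; apply: Q_bad; apply: hs.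
rewrite /GQ; case: ifP => gw; last by rewrite subst0.
by rewrite substU big_map.
Qed.

Lemma Q_endo (s : XZ -> FZ) : graded_endo degZ s ->
  graded_endo degZ (fun x => Q (s (x.1, d * x.2))).
Proof.
move=> hs x; have := Q_homog (hs (x.1, d * x.2)); rewrite /degZ /= mulKz //.
Qed.

Lemma prodPP_seq (s : XZ -> FZ) (w : seq XZ) :
  \prod_(x <- w) PP (s x) =
  \prod_(y <- map hm w) (if good y then PP (s (y.1, (y.2 %/ d)%Z)) else 0).
Proof.
rewrite big_map; apply: eq_bigr => x _.
have gx : good (hm x) by rewrite /good /hm dvdz_mul_self.
rewrite gx.
have -> : ((hm x).1, ((hm x).2 %/ d)%Z) = x by case: x {gx} => i m; rewrite /hm /= mulKz.
by [].
Qed.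

Lemma PP_subst (s : XZ -> FZ) (f : FZ) :
  PP (subst s f) = subst (fun x => if good x then PP (s (x.1, (x.2 %/ d)%Z)) else 0) (PP f).
Proof.
rewrite {1}substE (@Lin_comp _ _ _ _ _ PP _); last exact: PP_lin.
rewrite {2}/PP (@Lin_comp _ _ _ _ _ (fun p => subst _ p) _); last exact: subst_lin.
apply: Lin_eqG => w /=.
by rewrite PP_prod prodPP_seq /GP substU.
Qed.

Lemma PP_endo (s : XZ -> FZ) : graded_endo degZ s ->
  graded_endo degZ (fun x => if good x then PP (s (x.1, (x.2 %/ d)%Z)) else 0).
Proof.
move=> hs x; case: ifP => gx; last exact: homog0.
have := PP_homog (hs (x.1, (x.2 %/ d)%Z)); rewrite /degZ /= mulrC divzK //.
Qed.

Lemma QPP (f : FZ) : Q (PP f) = f.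
Proof.
rewrite /PP (@Lin_comp _ _ _ _ _ Q _); last exact: Q_lin.
rewrite -[RHS]Lin_id; apply: Lin_eqG => w.
rewrite /Q /GP; apply: etrans; first exact: LinU.
rewrite scale1r /GQ /=.
have -> : goodw (map hm (fmonom_val w)).
  by apply/allP => x /mapP [y _ ->]; rewrite /good /= dvdz_mul_self.
rewrite -map_comp map_id_in ?fmK // => x _.
by case: x => i m; rewrite /hq /hm /= mulKz.
Qed.

Lemma PPQ (f : FZ) : PP (Q f) = Lin (fun w => if goodw (fmonom_val w) then << w >> else 0) f.
Proof.
rewrite /Q (@Lin_comp _ _ _ _ _ PP _); last exact: PP_lin.
apply: Lin_eqG => w; rewrite /GQ; case: ifP => gw; last by rewrite /PP Lin0.
rewrite /PP; apply: etrans; first exact: LinU.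
rewrite scale1r /GP /= -map_comp map_id_in ?fmK // => x xw.
case: x xw => i m xw; rewrite /hq /hm /= mulrC divzK //.
by move/allP: gw => /(_ _ xw).
Qed.

Lemma PsiPhiE (f : FZ) : Psi (Phi d f) = PP f.
Proof.
rewrite /Psi /Phi relabelE relabelE (@Lin_comp _ _ _ _ _ (fun p => Lin _ p) _); last exact: Lin_lin.
apply: Lin_eqG => w /=; apply: etrans; first exact: LinU.
by rewrite scale1r /GP /= -map_comp.
Qed.

Lemma pull_Tideal (T : FZ -> FZ) (I : FZ -> Prop) (sg : (XZ -> FZ) -> XZ -> FZ) :
  is_Tideal degZ I -> T 0 = 0 -> (forall x y, T (x + y) = T x + T y) ->
  (forall c x, T (c *: x) = c *: T x) -> (forall x y, T (x * y) = T x * T y) ->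
  (forall s f, graded_endo degZ s -> graded_endo degZ (sg s) /\ T (subst s f) = subst (sg s) (T f)) ->
  is_Tideal degZ (fun g => I (T g)).
Proof.
move=> [I0 ID IZ IM IE] T0 TD TZ TM TE; split.
- by rewrite T0.
- by move=> x y Hx Hy; rewrite TD; apply: ID.
- by move=> c x Hx; rewrite TZ; apply: IZ.
- move=> x y Hx. rewrite (TM y x). rewrite (TM x y). exact: IM _ _ Hx.
- by move=> s x hs Hx; have [hs' ->] := TE s x hs; apply: IE.
Qed.

Lemma Q_pull (I : FZ -> Prop) : is_Tideal degZ I -> is_Tideal degZ (fun g => I (Q g)).
Proof.
move=> HI; apply: (@pull_Tideal Q I (fun s x => Q (s (x.1, d * x.2)))); first exact: HI.
- exact: Lin0.
- exact: LinD.
- exact: LinZ.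
- exact: Q_mul.
- by move=> s f hs; split; [exact: Q_endo | exact: Q_subst].
Qed.

Lemma PP_pull (I : FZ -> Prop) : is_Tideal degZ I -> is_Tideal degZ (fun g => I (PP g)).
Proof.
move=> HI; apply: (@pull_Tideal PP I (fun s x => if good x then PP (s (x.1, (x.2 %/ d)%Z)) else 0)); first exact: HI.
- exact: Lin0.
- exact: LinD.
- exact: LinZ.
- exact: PP_mul.
- by move=> s f hs; split; [exact: PP_endo | exact: PP_subst].
Qed.

Lemma split_bad (I : FZ -> Prop) (f : FZ) : is_Tideal degZ I ->
  (forall i m, ~~ (d %| m)%Z -> I (var F i m)) -> I (PP (Q f)) -> I f.
Proof.
move=> HI Hv HQ; have [I0 ID IZ IM IE] := HI.
rewrite PPQ in HQ.
have -> : f = Lin (fun w => if goodw (fmonom_val w) then << w >> else 0) f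
            + Lin (fun w => if goodw (fmonom_val w) then 0 else << w >>) f.
  rewrite -Lin_addG -[LHS]Lin_id; apply: Lin_eqG => w.
  by case: ifP; rewrite ?addr0 ?add0r.
apply: (ID _ _ HQ). apply: (Tideal_Lin HI) => w _.
case: ifP => gw //; move/negbT: gw => /allPn [x xw bx].
rewrite -[w]fmK; move: (fmonom_val w) xw => sw; case/splitPr => w1 w2.
rewrite -cat1s catA (@Umul F _ (w1 ++ [:: x]) w2) (@Umul F _ w1 [:: x]).
have Hx : I (<< FMonom [:: x] >>) by case: x bx => i m bx; apply: Hv.
exact: (proj2 (IM _ (<< FMonom w2 >>) (proj1 (IM _ (<< FMonom w1 >>) Hx)))).
Qed.
End Conc.



Section ESide.
Variable F : fieldType.
Variables (n : nat) (r : 'I_n -> int) (part : nat -> 'I_n) (d : int).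
Hypothesis d0 : d != 0.
Hypothesis hdiv : forall j, (d %| r j)%Z.
Let r' := fun j => (r j %/ d)%Z.

Lemma Edeg_div T : Edeg r part T = Edeg r' part T * d.
Proof. by rewrite /Edeg mulr_suml; apply: eq_bigr => i _; rewrite /r' divzK. Qed.

Lemma Ehomog_bad (a : Egr F) m : Ehomog r part a m -> ~~ (d %| m)%Z -> a = 0.
Proof.
move=> ha nd; apply/malgP => T; rewrite mcoeff0.
case: msuppP => // Ta; move: (ha T Ta); rewrite Edeg_div => e.
by rewrite -e dvdz_mull ?dvdzz in nd.
Qed.

Lemma Emul0a (b : Egr F) : Emul 0 b = 0.
Proof. by rewrite /Emul msupp0 big_nil. Qed.

Lemma Emula0 (a : Egr F) : Emul a 0 = 0.
Proof. by rewrite /Emul big1 // => S _; rewrite msupp0 big_nil. Qed.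

Lemma EevalE (s : XZ -> Egr F) (f : FreeZ F) :
  Eeval s f = Lin (fun w => \big[@Emul F/@Eone F]_(x <- fmonom_val w) s x) f.
Proof. by []. Qed.

Lemma prodE_seq (s s' : XZ -> Egr F) (w : seq XZ) :
  (forall x, good d x -> s x = s' (hq d x)) -> (forall x, ~~ good d x -> s x = 0) ->
  \big[@Emul F/@Eone F]_(x <- w) s x =
  if goodw d w then \big[@Emul F/@Eone F]_(y <- map (hq d) w) s' y else 0.
Proof.
move=> hg hb; elim: w => [|x w IH]; first by rewrite !big_nil.
rewrite big_cons /goodw /=; case gx: (good d x) => /=; last by rewrite hb ?gx // Emul0a.
rewrite IH -/(goodw d w); case: (goodw d w); last by rewrite Emula0.
by rewrite big_cons hg.
Qed.

Lemma EevalQ (s s' : XZ -> Egr F) (f : FreeZ F) :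
  (forall x, good d x -> s x = s' (hq d x)) -> (forall x, ~~ good d x -> s x = 0) ->
  Eeval s' (Q d f) = Eeval s f.
Proof.
move=> hg hb; rewrite EevalE /Q (@Lin_comp _ _ _ _ _ (fun p => Lin _ p) _); last exact: Lin_lin.
rewrite EevalE; apply: Lin_eqG => w /=.
rewrite (prodE_seq _ hg hb) /GQ; case: ifP => gw; last exact: Lin0.
by apply: etrans; [exact: LinU | rewrite scale1r].
Qed.

Lemma TZ_Q (f : FreeZ F) : TZ r part f <-> TZ r' part (Q d f).
Proof.
split=> H s hs.
- pose s0 := fun x : XZ => if good d x then s (hq d x) else 0.
  rewrite (@EevalQ s0) ?H //.
  + move=> x; rewrite /s0; case: ifP => gx; last by move=> T; rewrite msupp0.
    move=> T /(hs (hq d x)); rewrite Edeg_div => ->; rewrite /hq /= divzK //.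
  + by move=> x gx; rewrite /s0 gx.
  + by move=> x gx; rewrite /s0 (negbTE gx).
- pose s1 := fun y : XZ => s (y.1, y.2 * d).
  rewrite -(@EevalQ s s1) ?H //.
  + move=> y T /(hs (y.1, y.2 * d)); rewrite Edeg_div /= => e.
    by apply: (mulIf d0).
  + by move=> [i m] gx; rewrite /s1 /hq /= divzK.
  + by move=> x gx; apply: (Ehomog_bad (hs x)).
Qed.
End ESide.

Lemma gcd_fam_dvd (n : nat) (r : 'I_n -> int) j : (gcd_fam r %| r j)%Z.
Proof.
rewrite /gcd_fam; have : j \in index_enum 'I_n by rewrite mem_index_enum.
elim: (index_enum 'I_n) => [|x s IH] //.
rewrite in_cons big_cons => /orP [/eqP <-|js]; first exact: dvdz_gcdl.
exact: dvdz_trans (dvdz_gcdr _ _) (IH js).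
Qed.


Unset Implicit Arguments.
Set Strict Implicit.


Theorem theorem5p5 (F : fieldType) (charF0 : [pchar F] =i pred0)
  (n : nat) (r : 'I_n -> int) (v : 'I_n -> option nat) (part : nat -> 'I_n)
  (r_distinct : injective r)
  (hpart : part_card part v)
  (hsupp : is_subgroupZ (Esupport F r part))
  (d : int) (hd : d = gcd_fam r) (d_neq0 : d != 0)
  (S : FreeZ F -> Prop)
  (hS : forall f, TZ (fun j => (r j %/ d)%Z) part f <-> Tgen degZ S f) :
  forall f : FreeZ F,
    TZ r part f <->
    Tgen degZ
      (fun g => (exists2 f0, S f0 & g = Psi (Phi d f0))
              \/ (exists i m, ~~ (d %| m)%Z /\ g = var F i m)) f.
Proof.
move=> f.
have hdiv : forall j, (d %| r j)%Z by move=> j; rewrite hd; exact: gcd_fam_dvd.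
rewrite (TZ_Q part d_neq0 hdiv f) hS.
set SN := (fun g => _ \/ _).
have [T0 TD TZ TM TE] := Tgen_ideal degZ S.
split=> H.
- have HJ := PP_pull d_neq0 (Tgen_ideal degZ SN).
  apply: (@split_bad F d _ f (Tgen_ideal degZ SN)).
    move=> i m bm I HI HSN; apply: HSN; right; exists i, m; split; first exact: bm.
    by [].
  have HQ := H _ HJ.
  apply: HQ => g Sg I HI HSN; apply: HSN.
  by left; exists g => //; rewrite PsiPhiE.
- have HJ := Q_pull d_neq0 (Tgen_ideal degZ S).
  apply: (H _ HJ) => g [[f0 Sf0 ->]|[i [m [bm ->]]]].
  + by rewrite PsiPhiE (QPP d_neq0) => I HI HS'; apply: HS'.
  + have -> : Q d (var F i m) = 0.
      rewrite /Q /var; apply: etrans; first exact: LinU.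
      by rewrite /GQ /goodw /= /good /= (negbTE bm) scaler0.
    exact: T0.
Qed.
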